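(* Let $\alpha$ be a graph function on a strongly connected digraph $G$, with heights $y$ and levels $x$, and let $v$ be a vertex with $y_v>\min_u y_u$. Let $x_U=\max\{x_u: y_u<y_v\}$ and $U=\{u: y_u<y_v,\ x_u=x_U\}$. Then there is a vertex $u'\in U$ and an edge $(u',v')$ of $G$ with $v'\notin U$, $\alpha^R_{u'v'}\ge x_U$, and $y_{v'}\ge y_v$.
   Context: $G$ is a strongly connected directed graph (self-loops allowed); $u\to v$ means $(u,v)$ is an edge. A graph function assigns a real weight $\alpha_{uv}$ to each edge. $\alpha_v^{\text{in}}=\max_{u\to v}\alpha_{uv}$, $\alpha_v^{\text{out}}=\max_{v\to w}\alpha_{vw}$, $\rho^R_v=\max\{0,\alpha_v^{\text{out}}-\alpha_v^{\text{in}}\}$. A raising operation at $v$: if $\rho^R_v>0$ add $\rho^R_v/2$ to each incoming edge weight $\alpha_{uv}$ ($u\ne v$) and subtract it from each outgoing $\alpha_{vw}$ ($w\neq v$); otherwise do nothing. Starting from $\alpha$, for any infinite sequence of raising operations in which every vertex occurs infinitely often, the cumulative amount by which each vertex has been raised converges to a limit vector $r^*$ independent of the sequence, and the graph functions converge to the raising-balanced graph function $\alpha^R_{uv}=\alpha_{uv}+r^*_v-r^*_u$. Heights: $y_v=-r^*_v$. Levels: $x_v=\max_{u\to v}\alpha^R_{uv}$. *)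

(* Defs.v *)
From HB Require Import structures.
From mathcomp Require Import all_boot all_order all_algebra.
From mathcomp Require Import all_classical all_reals all_analysis.
Set Implicit Arguments. Unset Strict Implicit. Unset Printing Implicit Defensive.
Import Order.TTheory GRing.Theory Num.Theory.
Local Open Scope ring_scope.

Section Defs.
Variables (R : realType) (V : finType).

(* Maximum of f over the finite set {u | P u}; 0 if that set is empty
   (the empty case never arises where it matters). *)
Definition fmax (P : pred V) (f : V -> R) : R :=
  match [pick u | P u] with
  | Some u0 => \big[Num.max/f u0]_(u | P u) f u
  | None => 0
  end.

Variable E : rel V.

Definition strongly_connected : Prop := forall u v, connect E u v.

Definition alpha_in (a : V -> V -> R) (v : V) : R := fmax (fun u => E u v) (fun u => a u v).
Definition alpha_out (a : V -> V -> R) (v : V) : R := fmax (fun w => E v w) (fun w => a v w).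
Definition rhoR (a : V -> V -> R) (v : V) : R := Num.max 0 (alpha_out a v - alpha_in a v).

Definition raise (a : V -> V -> R) (v : V) : V -> V -> R :=
  fun u w =>
    if (w == v) && (u != v) then a u w + rhoR a v / 2
    else if (u == v) && (w != v) then a u w - rhoR a v / 2
    else a u w.

Fixpoint raise_seq (a : V -> V -> R) (s : nat -> V) (n : nat) : V -> V -> R :=
  match n with
  | 0 => a
  | n.+1 => raise (raise_seq a s n) (s n)
  end.

Definition cum_raise (a : V -> V -> R) (s : nat -> V) (n : nat) (v : V) : R :=
  \sum_(k < n | s k == v) rhoR (raise_seq a s k) v / 2.

Definition fair (s : nat -> V) : Prop := forall v N, exists2 n, (N <= n)%N & s n = v.

(* raising-balanced graph function, heights, levels from the limit r *)
Definition balanced (a : V -> V -> R) (r : V -> R) : V -> V -> R :=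
  fun u v => a u v + r v - r u.
Definition height (r : V -> R) (v : V) : R := - r v.
Definition level (a : V -> V -> R) (r : V -> R) (v : V) : R :=
  alpha_in (balanced a r) v.

End Defs.

(* Main.v *)
Require Import Defs.
From HB Require Import structures.
From mathcomp Require Import all_boot all_order all_algebra.
From mathcomp Require Import all_classical all_reals all_analysis.
From mathcomp Require Import lra.
Import Order.TTheory GRing.Theory Num.Theory.
Import numFieldNormedType.Exports.
Local Open Scope classical_set_scope.
Local Open Scope ring_scope.



Section H.
Variables (R : realType) (V : finType).

Lemma bigmax_ge_seq (P : pred V) (f : V -> R) x0 (s : seq V) u :
  u \in s -> P u -> f u <= \big[Num.max/x0]_(i <- s | P i) f i.
Proof.
elim: s => // a s IH; rewrite in_cons big_cons => /orP[/eqP<-|us] Pu.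
  by rewrite Pu le_max lexx.
case: (P a); last exact: IH.
by rewrite le_max IH // orbT.
Qed.

Lemma fmax_ge (P : pred V) (f : V -> R) u : P u -> f u <= fmax P f.
Proof.
move=> Pu; rewrite /fmax; case: pickP => [u0 Pu0|none]; last by rewrite none in Pu.
by apply: bigmax_ge_seq => //; rewrite mem_index_enum.
Qed.

Lemma fmax_attain (P : pred V) (f : V -> R) u : P u -> exists2 u', P u' & fmax P f = f u'.
Proof.
move=> Pu; rewrite /fmax; case: pickP => [u0 Pu0|none]; last by rewrite none in Pu.
apply: (big_ind (fun z => exists2 u', P u' & z = f u')).
- by exists u0.
- move=> a b [ua Pa ->] [ub Pb ->]; case: (leP (f ua) (f ub)) => _.
  + by exists ub.
  + by exists ua.
- by move=> i Pi; exists i.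
Qed.

Lemma lim_ub (u : nat -> R) l M : u n @[n --> \oo] --> l ->
  (exists N, forall n, (N <= n)%N -> u n <= M) -> l <= M.
Proof.
move=> cv [N HN]; rewrite leNgt; apply/negP => hlt.
move/cvgrPdist_lt: (cv) => /(_ (l - M)); rewrite subr_gt0 => /(_ hlt).
case=> N' _ HN'.
have h1 := HN (maxn N N') (leq_maxl _ _).
have h2 : `|l - u (maxn N N')| < l - M by apply: HN'; rewrite /= leq_maxr.
have := ler_norm (l - u (maxn N N')); lra.
Qed.

Lemma lim_lb (u : nat -> R) l M : u n @[n --> \oo] --> l ->
  (exists N, forall n, (N <= n)%N -> M <= u n) -> M <= l.
Proof.
move=> cv [N HN]; rewrite leNgt; apply/negP => hlt.
move/cvgrPdist_lt: (cv) => /(_ (M - l)); rewrite subr_gt0 => /(_ hlt).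
case=> N' _ HN'.
have h1 := HN (maxn N N') (leq_maxl _ _).
have h2 : `|l - u (maxn N N')| < M - l by apply: HN'; rewrite /= leq_maxr.
have := ler_norm (u (maxn N N') - l); rewrite distrC; lra.
Qed.

End H.



Section G.
Variables (R : realType) (V : finType) (E : rel V) (a : V -> V -> R) (s : nat -> V).

Lemma cum_rec n w : cum_raise E a s n.+1 w =
  cum_raise E a s n w + (if s n == w then rhoR E (raise_seq E a s n) w / 2 else 0).
Proof. by rewrite /cum_raise big_mkcond big_ord_recr /= -big_mkcond. Qed.

Lemma cum0 w : cum_raise E a s 0 w = 0.
Proof. by rewrite /cum_raise big_ord0. Qed.

Lemma rhoR_ge0 (b : V -> V -> R) w : 0 <= rhoR E b w.
Proof. by rewrite /rhoR le_max lexx. Qed.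

Lemma raise_seq_bal n : raise_seq E a s n = balanced a (cum_raise E a s n).
Proof.
elim: n => [|n IH].
  by apply/funext => u; apply/funext => w; rewrite /balanced /= !cum0; lra.
apply/funext => u; apply/funext => w; rewrite /= [in RHS]/balanced !cum_rec IH /raise.
set rho := rhoR E (balanced a (cum_raise E a s n)) (s n).
rewrite /balanced.
case: (eqVneq w (s n)) => [->|hw]; case: (eqVneq u (s n)) => [->|hu] /=;
  rewrite ?eqxx ?(negbTE hw) ?(negbTE hu) ?(eq_sym (s n)) ?(negbTE hw) ?(negbTE hu) /=; rewrite /rho /balanced; lra.
Qed.

Lemma gap_bound (c r' : V -> R) w p q :
  (exists b, E w b) -> (exists b, E b w) ->
  (forall z, c z - r' z <= p) -> q <= c w - r' w ->
  alpha_out E (balanced a c) w - alpha_in E (balanced a c) w <=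
  alpha_out E (balanced a r') w - alpha_in E (balanced a r') w + 2 * (p - q).
Proof.
move=> [b1 hb1] [b2 hb2] hp hq; rewrite /alpha_out /alpha_in.
have [w1 e1 ->] := @fmax_attain R V (fun w1 => E w w1) (fun w1 => balanced a c w w1) _ hb1.
have [w2 e2 ->] := @fmax_attain R V (fun w2 => E w2 w) (fun w2 => balanced a r' w2 w) _ hb2.
have o := @fmax_ge R V (fun w1 => E w w1) (fun w1 => balanced a r' w w1) _ e1.
have i := @fmax_ge R V (fun w2 => E w2 w) (fun w2 => balanced a c w2 w) _ e2.
rewrite /alpha_out /alpha_in.
move: o i; rewrite /balanced /=.
have := hp w1; have := hp w2; lra.
Qed.

End G.



Lemma path_last_edge (T : finType) (e : rel T) x p :
  path e x p -> x != last x p -> exists2 z, connect e x z & e z (last x p).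
Proof.
elim: p x => [|b p IH] x /=; first by rewrite eqxx.
case/andP=> exb pth nx.
case: (eqVneq b (last b p)) => [hb|hb].
  by exists x => //; rewrite -hb.
have [z cz ez] := IH b pth hb.
by exists z => //; apply: connect_trans (connect1 exb) cz.
Qed.

Lemma connect_last_edge (T : finType) (e : rel T) x y :
  connect e x y -> x != y -> exists2 z, connect e x z & e z y.
Proof. by case/connectP=> p pth -> ne; exact: path_last_edge. Qed.

Lemma has_edges (V : finType) (E : rel V) (u1 u2 : V) :
  strongly_connected E -> u1 != u2 ->
  forall w, (exists b, E w b) /\ (exists b, E b w).
Proof.
move=> sc ne w.
have [w' nw] : exists w', w != w'.
  case: (eqVneq w u1) => [->|h]; [by exists u2|by exists u1].
split.
  have /connectP [[|b p] /= pth eq] := sc w w'; first by rewrite eq eqxx in nw.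
  by case/andP: pth => h _; exists b.
have nw' : w' != w by rewrite eq_sym.
have [z _ ez] := @connect_last_edge _ _ _ _ (sc w' w) nw'.
by exists z.
Qed.

Section L.
Variables (R : realType) (V : finType) (E : rel V) (a : V -> V -> R) (s : nat -> V) (r : V -> R).
Hypothesis edges : forall w, (exists b, E w b) /\ (exists b, E b w).
Hypothesis fr : fair s.
Hypothesis cv : forall w, cum_raise E a s n w @[n --> \oo] --> r w.

Lemma cum_ge0 n w : 0 <= cum_raise E a s n w.
Proof.
elim: n => [|n IH]; first by rewrite cum0.
rewrite cum_rec; case: ifP => _; last by rewrite addr0.
have := rhoR_ge0 _ _ E (raise_seq E a s n) w; lra.
Qed.

Lemma r_ge0 w : 0 <= r w.
Proof. by apply: (@lim_lb R _ _ _ (cv w)); exists 0%N => n _; exact: cum_ge0. Qed.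

Lemma bal_limit w : alpha_out E (balanced a r) w <= alpha_in E (balanced a r) w.
Proof.
rewrite leNgt; apply/negP => hlt.
set d := alpha_out E (balanced a r) w - alpha_in E (balanced a r) w.
have d0 : 0 < d by rewrite /d subr_gt0.
have e0 : 0 < d / 8 by rewrite divr_gt0.
have : \forall n \near \oo, forall z, `|r z - cum_raise E a s n z| < d / 8.
  apply: filter_forall => z.
  by move/cvgrPdist_lt: (cv z) => /(_ _ e0).
case=> N _ HN.
have [n Nn sn] := fr w N.
have h0 := HN n Nn; have h1 := HN n.+1 (leqW Nn).
have := @gap_bound R V E a r (cum_raise E a s n) w (d / 8) (- (d / 8))
  (proj1 (edges w)) (proj2 (edges w)).
have hp : forall z, r z - cum_raise E a s n z <= d / 8.
  by move=> z; have := ler_norm (r z - cum_raise E a s n z); have := h0 z; lra.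
have hq : - (d / 8) <= r w - cum_raise E a s n w.
  have := ler_norm (- (r w - cum_raise E a s n w)); rewrite normrN; have := h0 w; lra.
move=> /(_ hp hq).
have := h1 w; have := h0 w; rewrite cum_rec sn eqxx raise_seq_bal.
set rho := rhoR E _ w.
have : alpha_out E (balanced a (cum_raise E a s n)) w -
       alpha_in E (balanced a (cum_raise E a s n)) w <= rho by rewrite /rho /rhoR le_max lexx orbT.
move: d0; rewrite /d.
set o1 := alpha_out _ _ _; set i1 := alpha_in _ _ _; set o2 := alpha_out _ _ _; set i2 := alpha_in _ _ _.
set c1 := cum_raise _ _ _ _ _; set c2 := r w.
move=> X1 X2 X3 X4 X5.
have := ler_norm (- (c2 - (c1 + rho / 2))); have := ler_norm (c2 - c1); rewrite normrN.
move=> Y1 Y2.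
move: X1 X2 X3 X4 X5 Y1 Y2; set D := o1 - i1; move=> X1 X2 X3 X4 X5 Y1 Y2.
lra.
Qed.

Lemma cum_le (r' : V -> R) :
  (forall w, alpha_out E (balanced a r') w <= alpha_in E (balanced a r') w) ->
  (forall w, 0 <= r' w) -> forall n w, cum_raise E a s n w <= r' w.
Proof.
move=> br r0; elim=> [|n IH] w; first by rewrite cum0.
rewrite cum_rec; case: ifP => _; last by rewrite addr0.
rewrite raise_seq_bal.
have := @gap_bound R V E a (cum_raise E a s n) r' w 0
  (cum_raise E a s n w - r' w) (proj1 (edges w)) (proj2 (edges w)).
have hp : forall z, cum_raise E a s n z - r' z <= 0 by move=> z; have := IH z; lra.
move=> /(_ hp (lexx _)) G.
have B := br w; have I := IH w.
have : Num.max 0 (alpha_out E (balanced a (cum_raise E a s n)) w -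
    alpha_in E (balanced a (cum_raise E a s n)) w) <= 2 * (r' w - cum_raise E a s n w).
  by rewrite ge_max; apply/andP; split; lra.
rewrite /rhoR; lra.
Qed.

Lemma r_le (r' : V -> R) :
  (forall w, alpha_out E (balanced a r') w <= alpha_in E (balanced a r') w) ->
  (forall w, 0 <= r' w) -> forall w, r w <= r' w.
Proof.
move=> br r0 w; apply: (@lim_ub R _ _ _ (cv w)); exists 0%N => n _; exact: cum_le.
Qed.

End L.



Lemma bigmin_le_seq (R : realType) (I : eqType) (f : I -> R) x0 (s : seq I) u :
  u \in s -> \big[Num.min/x0]_(i <- s) f i <= f u.
Proof.
elim: s => // b s IH; rewrite in_cons big_cons => /orP[/eqP<-|us].
  by rewrite ge_min lexx.
by rewrite ge_min IH // orbT.
Qed.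

Theorem lemma7 (R : realType) (V : finType) (E : rel V) (alpha : V -> V -> R)
  (s : nat -> V) (r : V -> R) :
  strongly_connected E ->
  fair s ->
  (forall w, cum_raise E alpha s n w @[n --> \oo] --> r w) ->
  forall v : V,
    (exists u, height r u < height r v) ->
    let y := height r in
    let x := level E alpha r in
    let aR := balanced alpha r in
    let xU := fmax (fun u => y u < y v) x in
    let U := fun u => (y u < y v) && (x u == xU) in
    exists u' v', [/\ U u', E u' v', ~~ U v', xU <= aR u' v' & y v <= y v'].
Proof.
move=> sc fr cv v [u1 hu1] y x aR xU U.
have ne : u1 != v by apply/eqP => e; move: hu1; rewrite e ltxx.
have edges := @has_edges V E u1 v sc ne.
have bal : forall w, alpha_out E aR w <= alpha_in E aR w.
  by move=> w; apply: (@bal_limit R V E alpha s r edges fr cv).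
have r0 := @r_ge0 R V E alpha s r cv.
have xE : forall w, x w = alpha_in E aR w by [].
have [uU LuU xUe] := @fmax_attain R V (fun u => y u < y v) x _ hu1.
have UuU : U uU by rewrite /U LuU /= /xU xUe eqxx.
apply: contrapT => nh.
have closedU : forall a b, U a -> E a b -> xU <= aR a b -> U b.
  move=> a b Ua Eab hab; apply/negPn/negP => nUb; apply: nh; exists a, b; split => //.
  rewrite leNgt; apply/negP => ybv; move: nUb; rewrite /U ybv /= => /negP; apply.
  apply/eqP/le_anti/andP; split.
    exact: (@fmax_ge R V (fun u => y u < y v) x _ ybv).
  apply: le_trans hab _; rewrite xE /alpha_in.
  exact: (@fmax_ge R V (fun u => E u b) (fun u => aR u b) _ Eab).
pose T : rel V := fun a b => E a b && (xU <= aR a b).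
have Ucl : forall a b, U a -> connect T a b -> U b.
  move=> a b Ua /connectP [p pth ->]; elim: p a Ua pth => //= c p IH a Ua /andP[/andP[Eac hac] pth].
  by apply: IH pth; exact: closedU Ua Eac hac.
case: (arg_minnP (fun u => #|finset (connect T u)|) UuU) => u0 Uu0 minu0.
pose S : {set V} := finset (connect T u0).
have u0S : u0 \in S by rewrite /S inE connect0.
have SU : forall z, z \in S -> U z by move=> z; rewrite /S inE; exact: Ucl.
have Scl : forall a b, a \in S -> T a b -> b \in S.
  by move=> a b; rewrite /S !inE => ha hab; apply: connect_trans ha (connect1 hab).
have predS : forall w b, w \in S -> T w b -> exists2 a, a \in S & T a w.
  move=> w b Sw Twb.
  case: (eqVneq w u0) => [ew|nw]; last first.
    have cw : connect T u0 w by move: Sw; rewrite inE.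
    have nw' : u0 != w by rewrite eq_sym.
    have [z cz Tz] := @connect_last_edge _ _ _ _ cw nw'.
    by exists z => //; rewrite inE.
  rewrite ew in Twb *.
  have Sb : b \in S by exact: Scl u0S Twb.
  have sub : finset (connect T b) \subset S.
    by apply/fintype.subsetP => z; rewrite /S !inE => cz; exact: connect_trans (connect1 Twb) cz.
  have cardE : #|finset (connect T b)| = #|S|.
    apply/eqP; rewrite eqn_leq subset_leq_card //=; exact: minu0 (SU _ Sb).
  have eqS := (subset_cardP cardE sub).
  have cb : connect T b u0 by have := eqS u0; rewrite u0S inE.
  case: (eqVneq b u0) => [eb|nb]; first by exists u0 => //; rewrite -{2}eb.
  have [z cz Tz] := @connect_last_edge _ _ _ _ cb nb.
  by exists z => //; rewrite /S inE; exact: connect_trans (connect1 Twb) cz.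
pose g (p : V * V) : R := Num.min
  (if E p.1 p.2 && (aR p.1 p.2 < xU) then (xU - aR p.1 p.2) / 2 else 1)
  (if y p.1 < y v then r p.1 - r v else 1).
pose eps := \big[Num.min/1]_(p : V * V) g p.
have geps : forall p, eps <= g p.
  by move=> p; apply: bigmin_le_seq; rewrite mem_index_enum.
have yE : forall z, y z = - r z by [].
have eps0 : 0 < eps.
  apply: (big_ind (fun z => 0 < z)) => //.
    by move=> p q hp hq; rewrite lt_min hp hq.
  move=> [p1 p2] _; rewrite /g /= lt_min; apply/andP; split.
    case: ifP => // /andP[_ h]; rewrite divr_gt0 // subr_gt0 //.
  case: ifP => //; rewrite !yE => h; rewrite subr_gt0; rewrite ltrN2 in h; exact: h.
pose r' := fun z => r z - (if z \in S then eps else 0).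
have r'0 : forall z, 0 <= r' z.
  move=> z; rewrite /r'; case: ifP => Sz; last by rewrite subr0; exact: r0.
  have := geps (z, z); rewrite /g /= le_min => /andP[_].
  have /andP[yz _] := SU _ Sz; rewrite yz => h.
  have := r0 v; lra.
have bE : forall p q, balanced alpha r' p q =
    aR p q + (if p \in S then eps else 0) - (if q \in S then eps else 0).
  by move=> p q; rewrite /balanced /r' /aR /balanced; lra.
have br' : forall w, alpha_out E (balanced alpha r') w <= alpha_in E (balanced alpha r') w.
  move=> w; have [[b1 hb1] [b2 hb2]] := edges w.
  rewrite /alpha_out.
  have [w1 E1 ->] := @fmax_attain R V (fun w1 => E w w1) (fun w1 => balanced alpha r' w w1) _ hb1.
  have [w2 E2 e2] := @fmax_attain R V (fun w2 => E w2 w) (fun w2 => aR w2 w) _ hb2.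
  have inlb : forall c, E c w -> balanced alpha r' c w <= alpha_in E (balanced alpha r') w.
    by move=> c Ec; exact: (@fmax_ge R V (fun c => E c w) (fun c => balanced alpha r' c w) _ Ec).
  have outR : aR w w1 <= aR w2 w.
    rewrite -e2; apply: le_trans (bal w).
    exact: (@fmax_ge R V (fun w1 => E w w1) (fun w1 => aR w w1) _ E1).
  have i1 := inlb w2 E2; rewrite bE in i1; rewrite bE.
  case Sw: (w \in S); rewrite Sw in i1 *.
    have xw : aR w2 w = xU.
      have /andP[_ /eqP] := SU _ Sw; rewrite xE /alpha_in; move=> <-; by rewrite e2.
    case tight: (xU <= aR w w1).
      have Tww1 : T w w1 by rewrite /T E1 tight.
      have Sw1 : w1 \in S by exact: Scl Sw Tww1.
      have [c Sc Tcw] := predS w w1 Sw Tww1.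
      move: Tcw; rewrite /T => /andP[Ecw hc].
      have := inlb c Ecw; rewrite bE Sc Sw Sw1.
      move: i1; case: (w2 \in S) => i1 i2; lra.
    have lt1 : aR w w1 < xU by rewrite ltNge tight.
    have := geps (w, w1); rewrite /g /= le_min E1 lt1 /= => /andP[h _].
    move: i1; case: (w2 \in S); case: (w1 \in S) => i1; lra.
  move: i1; case: (w2 \in S); case: (w1 \in S) => i1; lra.
have := @r_le R V E alpha s r edges cv r' br' r'0 u0.
rewrite /r' u0S; lra.
Qed.
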